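(* Let $\mathcal{H}$ be a finite nonempty set of humans with embeddings $\mathbf{e}_h\in\mathbb{R}^d$, let $\mathcal{L}$ be a finite set of agents with embeddings $\mathbf{e}_l\in\mathbb{R}^d$, and let $\operatorname{dist}$ be a metric on $\mathbb{R}^d$. Let $\rho\ge0$ and suppose that for each $h\in\mathcal{H}$ a proxy agent $l_h$ with embedding $\mathbf{e}_{l_h}$ is given satisfying $\operatorname{dist}(\mathbf{e}_h,\mathbf{e}_{l_h})\le\rho$; let $\tilde{\mathcal{L}}=\{l_h: h\in\mathcal{H}\}$ (an indexed family, one proxy per human). Let $D_{\max}$ be strictly larger than every distance between any two of the embeddings of elements of $\mathcal{H}\cup\mathcal{L}\cup\tilde{\mathcal{L}}$. For any finite indexed family $S$ of objects with embeddings, define $$f(S)=\frac{1}{|\mathcal{H}|}\sum_{h\in\mathcal{H}}\Big[D_{\max}-\min_{s\in S}\operatorname{dist}(\mathbf{e}_h,\mathbf{e}_s)\Big],$$ with $\min$ over the empty family equal to $D_{\max}$. Let $1\le M\le|\mathcal{H}|$, let $L^*_{\mathcal{L}}\in\arg\max_{L\subseteq\mathcal{L},|L|\le M}f(L)$, let $L^*_{\mathcal{H}}\in\arg\max_{S\subseteq\mathcal{H},|S|\le M}f(S)$ (humans themselves used as candidates, with their own embeddings), and define the human coverage ratio $\gamma=f(L^*_{\mathcal{H}})/f(L^*_{\mathcal{L}})$ (assume $f(L^*_{\mathcal{L}})>0$). Let $L^{\text{greedy}}_{\tilde{\mathcal{L}}}$ be the output of the greedy algorithm on $\tilde{\mathcal{L}}$: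 start with $L=\emptyset$ and for $i=1,\dots,M$ add an element $l\in\tilde{\mathcal{L}}\setminus L$ maximizing $f(L\cup\{l\})-f(L)$ (ties broken arbitrarily). Then $$f\big(L^{\text{greedy}}_{\tilde{\mathcal{L}}}\big)\;\ge\;\Big(1-\frac1e\Big)\Big(\gamma\cdot f(L^*_{\mathcal{L}})-\rho\Big).$$
   Context: Here $\rho$ is the ''imitation error'' bound: each proxy $l_h$ lies in the $\rho$-neighborhood of $h$ in embedding space. Humans and agents are both compared via their behavior embeddings in $\mathbb{R}^d$ and the metric $\operatorname{dist}$. *)

(* Defs.v *)
From HB Require Import structures.
From mathcomp Require Import all_boot all_order all_algebra.
From mathcomp Require Import all_classical all_reals all_analysis.
Set Implicit Arguments. Unset Strict Implicit. Unset Printing Implicit Defensive.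
Import Order.TTheory GRing.Theory Num.Theory.
Local Open Scope ring_scope.

Definition is_metric (R : realType) (V : Type) (dist : V -> V -> R) : Prop :=
  [/\ forall x y, 0 <= dist x y,
      forall x y, dist x y = 0 <-> x = y,
      forall x y, dist x y = dist y x &
      forall x y z, dist x z <= dist x y + dist y z].

(* Implemented as a big min with neutral element Dmax, which equals the true
   minimum whenever Dmax exceeds all the distances involved. *)
Definition mindist (R : realType) (V : Type) (dist : V -> V -> R) (Dmax : R)
  (I : finType) (e : I -> V) (S : {set I}) (p : V) : R :=
  \big[Num.min/Dmax]_(s in S) dist p (e s).

Definition coverage (R : realType) (V : Type) (dist : V -> V -> R) (Dmax : R)
  (H : finType) (eH : H -> V) (I : finType) (e : I -> V) (S : {set I}) : R :=
  (#|H|%:R)^-1 * \sum_(h : H) (Dmax - mindist dist Dmax e S (eH h)).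

(* s is a run of the greedy algorithm for objective f on candidate index type I,
   with M steps: at step i (0-based) the current set is the set of the first i
   picks, and the i-th pick is a not-yet-chosen element with maximal marginal
   gain (ties broken arbitrarily). *)
Definition greedy_run (R : realType) (I : finType) (f : {set I} -> R) (M : nat)
  (s : seq I) : Prop :=
  size s = M /\
  forall i, (i < M)%N ->
    forall x0 : I,
    let P := [set x in take i s] in
    nth x0 s i \notin P /\
    forall l, l \notin P -> f (l |: P) - f P <= f (nth x0 s i |: P) - f P.

Definition greedy_output (I : finType) (s : seq I) : {set I} := [set x in s].

(* Main.v *)
Require Import Defs.
From HB Require Import structures.
From mathcomp Require Import all_boot all_order all_algebra.
From mathcomp Require Import all_classical all_reals all_analysis.
From mathcomp Require Import ring lra.
Import Order.TTheory GRing.Theory Num.Theory.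
Local Open Scope ring_scope.

Section Cov.
Variables (R : realType) (V : Type) (dist : V -> V -> R) (Dmax : R).
Variables (H : finType) (eH : H -> V) (I : finType) (e : I -> V).
Hypothesis H0 : (0 < #|H|)%N.

Local Notation md := (mindist dist Dmax e).
Local Notation f := (coverage dist Dmax eH e).

Lemma md_le_D (S : {set I}) p : md S p <= Dmax.
Proof. exact: bigmin_le_id. Qed.

Lemma md_le_el (S : {set I}) p s : s \in S -> md S p <= dist p (e s).
Proof. by move=> sS; apply: (bigmin_le_cond _ (P := mem S)). Qed.

Lemma md_mono (S T : {set I}) p : S \subset T -> md T p <= md S p.
Proof.
move=> ST; apply: le_bigmin; first exact: md_le_D.
move=> s sS; apply: md_le_el; exact: (fintype.subsetP ST).
Qed.

Lemma cov_diff (A B : {set I}) : f A - f B =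
  (#|H|%:R)^-1 * \sum_h (md B (eH h) - md A (eH h)).
Proof.
rewrite /coverage -mulrBr -sumrB; congr (_ * _); apply: eq_bigr => h _.
ring.
Qed.

Lemma invH_gt0 : 0 < (#|H|%:R : R)^-1.
Proof. by rewrite invr_gt0 ltr0n. Qed.

Lemma cov_mono (S T : {set I}) : S \subset T -> f S <= f T.
Proof.
move=> ST; rewrite -subr_ge0 cov_diff; apply: mulr_ge0; first exact: ltW invH_gt0.
by apply: sumr_ge0 => h _; rewrite subr_ge0; apply: md_mono.
Qed.

Lemma cov0 : f finset.set0 = 0.
Proof.
rewrite /coverage; rewrite (eq_bigr (fun _ => 0)) ?big1 ?mulr0 // => h _.
by rewrite /mindist big_set0 subrr.
Qed.

Lemma cov_submod (OPT S : {set I}) : f OPT - f S <= \sum_(o in OPT) (f (o |: S) - f S).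
Proof.
rewrite cov_diff (eq_bigr _ (fun o _ => cov_diff _ _)) -mulr_sumr.
apply: ler_wpM2l; first exact: ltW invH_gt0.
rewrite exchange_big /=; apply: ler_sum => h _.
set t := (fun o => md S (eH h) - md (o |: S) (eH h)).
have t0 : forall o, 0 <= t o by move=> o; rewrite subr_ge0 md_mono // finset.subsetUr.
have s0 : 0 <= \sum_(o in OPT) t o by apply: sumr_ge0.
rewrite lerBlDr -lerBlDl; apply: le_bigmin.
  by have := md_le_D S (eH h); lra.
move=> o oO.
have ho : t o <= \sum_(o in OPT) t o.
  by rewrite (bigD1 o) //= lerDl; apply: sumr_ge0.
have : md (o |: S) (eH h) <= dist (eH h) (e o) by apply: md_le_el; rewrite finset.setU11.
rewrite /t in ho; lra.
Qed.

End Cov.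

Lemma greedy_bound (R : realType) (I : finType) (f : {set I} -> R) M s (OPT : {set I}) :
  (forall S T : {set I}, S \subset T -> f S <= f T) ->
  (forall S : {set I}, f OPT - f S <= \sum_(o in OPT) (f (o |: S) - f S)) ->
  f finset.set0 = 0 -> (#|OPT| <= M)%N -> (0 < M)%N -> greedy_run f M s ->
  (1 - (expR 1)^-1) * f OPT <= f (greedy_output s).
Proof.
move=> mono sub f0 hO M0 [sz G].
have x0 : I.
  case: s sz {G} => [|x t] sz; last exact: x.
  by move: M0; rewrite -sz.
pose P := fun i => [set x in take i s].
pose q := 1 - (M%:R : R)^-1.
have Mpos : 0 < (M%:R : R) by rewrite ltr0n.
have q0 : 0 <= q by rewrite subr_ge0 invf_le1 // ler1n.
have step : forall i, (i < M)%N -> f OPT - f (P i.+1) <= q * (f OPT - f (P i)).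
  move=> i iM; have [nP best] := G i iM x0.
  have PS : P i.+1 = nth x0 s i |: P i.
    by rewrite /P (take_nth x0) ?sz //; apply/setP => x; rewrite !inE mem_rcons in_cons.
  set g := f (nth x0 s i |: P i) - f (P i).
  have g0 : 0 <= g by rewrite subr_ge0 mono // finset.subsetUr.
  have hs : \sum_(o in OPT) (f (o |: P i) - f (P i)) <= \sum_(o in OPT) g.
    apply: ler_sum => o oO; case: (boolP (o \in P i)) => oP.
      have -> : o |: P i = P i by apply/finset.setUidPr; rewrite finset.sub1set.
      by rewrite subrr.
    exact: best.
  rewrite sumr_const in hs.
  have hM : g *+ #|OPT| <= g *+ M by apply: ler_wpMn2l g0 _ _ hO.
  have hV := sub (P i).
  have hd : (f OPT - f (P i)) / M%:R <= g.
    by rewrite ler_pdivrMr // mulr_natr; apply: le_trans hM; apply: le_trans hs.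
  rewrite PS /q -/g; move: hd; rewrite /g; lra.
have ind : forall k, (k <= M)%N -> f OPT - f (P k) <= q ^+ k * f OPT.
  elim=> [|k IH] hk.
    have -> : P 0%N = finset.set0 by apply/setP => x; rewrite !inE take0.
    by rewrite f0 expr0 mul1r subr0.
  apply: le_trans (step k hk) _; rewrite exprS -mulrA; apply: ler_wpM2l. exact q0.
  exact: IH (ltnW hk).
have := ind M (leqnn M).
have -> : P M = greedy_output s by rewrite /P -sz take_size.
have hq : q ^+ M <= (expR 1)^-1.
  rewrite -expRN.
  have -> : (-1 : R) = M%:R * (- (M%:R)^-1) by rewrite mulrN mulfV ?gt_eqF.
  rewrite expRM_natl; apply: lerXn2r; rewrite ?nnegrE ?expR_ge0 //.
  exact: expR_ge1Dx.
have qM0 : 0 <= q ^+ M by apply: exprn_ge0.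
have E1 : (expR 1 : R)^-1 <= 1.
  rewrite invf_le1 ?expR_gt0 //; apply: le_trans (expR_ge1Dx 1); lra.
have a0 : 0 <= f (greedy_output s).
  by rewrite -f0; apply: mono; apply: finset.sub0set.
move: hq qM0 E1 a0; set E := (expR 1)^-1; set Q := q ^+ M; set V := f OPT;
  set a := f _ => hq qM0 E1 a0 hk.
case: (lerP 0 V) => V0.
  have : (1 - E) * V <= (1 - Q) * V by apply: ler_wpM2r => //; lra.
  lra.
have : (1 - E) * V <= 0 by apply: mulr_ge0_le0; lra.
lra.
Qed.

Lemma proxy_bound (R : realType) (V : Type) (dist : V -> V -> R) (Dmax rho : R)
  (H : finType) (eH eP : H -> V) (S : {set H}) :
  is_metric dist -> (0 < #|H|)%N -> 0 <= rho -> (forall h, dist (eH h) (eP h) <= rho) ->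
  coverage dist Dmax eH eH S - rho <= coverage dist Dmax eH eP S.
Proof.
move=> [_ _ dsym tri] H0 rho0 hp.
have hinv : 0 < (#|H|%:R : R)^-1 by rewrite invr_gt0 ltr0n.
have -> : rho = (#|H|%:R)^-1 * \sum_(h : H) rho.
  rewrite sumr_const; change (rho = (#|H|%:R)^-1 * (rho *+ #|H|)).
  by rewrite -[rho *+ _]mulr_natl mulrA mulVf ?mul1r // pnatr_eq0 -lt0n.
rewrite /coverage -mulrBr -sumrB; apply: ler_wpM2l; first exact: ltW.
apply: ler_sum => h _.
suff : mindist dist Dmax eP S (eH h) - rho <= mindist dist Dmax eH S (eH h) by lra.
apply: le_bigmin; first by have := md_le_D _ _ dist Dmax _ eP S (eH h); lra.
move=> s sS.
have h1 := md_le_el _ _ dist Dmax _ eP S (eH h) s sS.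
have h2 := tri (eH h) (eH s) (eP s).
have := hp s; lra.
Qed.

Theorem theorem2 (R : realType) (d : nat) (dist : 'rV[R]_d -> 'rV[R]_d -> R)
  (Hh : finType) (Ag : finType)
  (eH : Hh -> 'rV[R]_d) (eA : Ag -> 'rV[R]_d) (eP : Hh -> 'rV[R]_d)
  (rho Dmax : R) (M : nat)
  (LstarA : {set Ag}) (LstarH : {set Hh}) (s : seq Hh) :
  is_metric dist ->
  (0 < #|Hh|)%N ->
  0 <= rho ->
  (forall h, dist (eH h) (eP h) <= rho) ->
  (forall x y : 'rV[R]_d,
     ((exists h, x = eH h) \/ (exists a, x = eA a) \/ (exists h, x = eP h)) ->
     ((exists h, y = eH h) \/ (exists a, y = eA a) \/ (exists h, y = eP h)) ->
     dist x y < Dmax) ->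
  (1 <= M <= #|Hh|)%N ->
  (#|LstarA| <= M)%N ->
  (forall L : {set Ag}, (#|L| <= M)%N ->
     coverage dist Dmax eH eA L <= coverage dist Dmax eH eA LstarA) ->
  (#|LstarH| <= M)%N ->
  (forall S : {set Hh}, (#|S| <= M)%N ->
     coverage dist Dmax eH eH S <= coverage dist Dmax eH eH LstarH) ->
  0 < coverage dist Dmax eH eA LstarA ->
  greedy_run (coverage dist Dmax eH eP) M s ->
  let gamma := coverage dist Dmax eH eH LstarH / coverage dist Dmax eH eA LstarA in
  coverage dist Dmax eH eP (greedy_output s) >=
    (1 - (expR 1)^-1) * (gamma * coverage dist Dmax eH eA LstarA - rho).
Proof.
move=> met H0 rho0 hp _ /andP[M1 _] _ _ hO _ hpos G; cbv zeta.
have gb := @greedy_bound _ _ (coverage dist Dmax eH eP) M s LstarH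
  (fun S T => cov_mono _ _ dist Dmax _ eH _ eP H0 S T)
  (fun S => cov_submod _ _ dist Dmax _ eH _ eP H0 LstarH S)
  (cov0 _ _ dist Dmax _ eH _ eP) hO M1 G.
apply: le_trans gb.
rewrite divfK ?gt_eqF //.
apply: ler_wpM2l; last exact: proxy_bound.
have : (expR 1 : R)^-1 <= 1.
  rewrite invf_le1 ?expR_gt0 //; apply: le_trans (expR_ge1Dx 1); lra.
lra.
Qed.
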